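(* Let ${\bf x}_0\in\mathbb{R}^m$ be a constant (leader state) and consider $n$ followers with states ${\bf x}_i(t)\in\mathbb{R}^m$ and dynamics $$\dot{\bf x}_i(t)=\sum_{j\in\mathcal{N}_i}{\bf K}_{ji}\big({\bf x}_j(t-T_{ji})-{\bf x}_i(t)\big)+\gamma_i{\bf K}_{0i}\big({\bf x}_0-{\bf x}_i(t)\big),\qquad i=1,\dots,n,$$ where $\mathcal{N}_i\subseteq\{1,\dots,n\}\setminus\{i\}$ are fixed neighbor sets among followers, each ${\bf K}_{ji}$ is constant symmetric positive definite, $T_{ji}\ge0$ are constant (possibly different) delays, $\gamma_i\in\{0,1\}$, and ${\bf K}_{0i}$ is a constant symmetric positive definite matrix whenever $\gamma_i=1$. Assume the whole network including the leader (node $0$ with edges $0\to i$ for $\gamma_i=1$) is connected, with $\gamma_i=1$ for at least one $i$, and that the links among followers are either bidirectional with ${\bf K}_{ji}={\bf K}_{ij}$, or unidirectional but formed into closed rings with identical gains within each ring. Then, regardless of the values of the delays and of the initial conditions, ${\bf x}_i(t)\to{\bf x}_0$ as $t\to\infty$ for all $i=1,\dots,n$. *)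

(* Defs.v *)
From HB Require Import structures.
From mathcomp Require Import all_boot all_order all_algebra.
From mathcomp Require Import all_classical all_reals all_analysis.
Set Implicit Arguments. Unset Strict Implicit. Unset Printing Implicit Defensive.
Import Order.TTheory GRing.Theory Num.Theory.
Import numFieldNormedType.Exports.
Local Open Scope ring_scope.

Definition spd (R : realType) (m : nat) (A : 'M[R]_m) : Prop :=
  A^T = A /\ forall v : 'cV[R]_m, v != 0 -> 0 < (v^T *m A *m v) ord0 ord0.

(* (j, i) is an edge of the closed directed ring c = [v_0; ...; v_(k-1)],
   i.e. j = v_l and i = v_((l+1) mod k) for some l < k. *)
Definition ring_edge (n : nat) (c : seq 'I_n) (j i : 'I_n) : bool :=
  has (fun l => (nth j c l == j) && (nth j c ((l.+1) %% size c) == i))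
      (iota 0 (size c)).

(* Undirected adjacency of the whole network: node None is the leader 0,
   node Some i is follower i.  Followers are adjacent when j \in N i or
   i \in N j; the leader is adjacent to i when gamma i. *)
Definition net_adj (n : nat) (N : 'I_n -> {set 'I_n}) (gamma : 'I_n -> bool)
  : rel (option 'I_n) :=
  fun u v => match u, v with
  | None, None => false
  | None, Some i => gamma i
  | Some i, None => gamma i
  | Some a, Some b => (a \in N b) || (b \in N a)
  end.

Definition net_connected (n : nat) (N : 'I_n -> {set 'I_n})
  (gamma : 'I_n -> bool) : Prop :=
  forall u v : option 'I_n, connect (net_adj N gamma) u v.

(* Link structure among followers: the edge set {(j,i) | j \in N i} splits
   into bidirectional links (a symmetric subset "bidir" with K j i = K i j)
   and unidirectional links that are partitioned into closed simple directed
   rings, each ring having identical gains on all its edges. *)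
Definition links_ok (R : realType) (m n : nat) (N : 'I_n -> {set 'I_n})
  (K : 'I_n -> 'I_n -> 'M[R]_m) : Prop :=
  exists (bidir : 'I_n -> 'I_n -> bool) (rings : seq (seq 'I_n)),
    [/\ (forall i j, bidir j i -> (j \in N i) /\ bidir i j /\ K j i = K i j),
        (forall c, c \in rings -> uniq c /\
           forall j i, ring_edge c j i -> (j \in N i) /\ ~~ bidir j i),
        (forall c, c \in rings -> forall j i k l,
           ring_edge c j i -> ring_edge c k l -> K j i = K k l) &
        (forall i j, j \in N i -> ~~ bidir j i ->
           count (fun c => ring_edge c j i) rings = 1%N)].

(* Main.v *)
Require Import Defs.
From HB Require Import structures.
From mathcomp Require Import all_boot all_order all_algebra.
From mathcomp Require Import all_classical all_reals all_analysis.
From mathcomp Require Import ring lra.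
Import Order.TTheory GRing.Theory Num.Theory.
Import numFieldNormedType.Exports.
Local Open Scope ring_scope.
Local Open Scope classical_set_scope.
Set Implicit Arguments. Unset Strict Implicit. Unset Printing Implicit Defensive.
Lemma nth_rot1 (T : Type) (x0 : T) (c : seq T) l : (l < size c)%N ->
  nth x0 (rot 1 c) l = nth x0 c ((l.+1) %% size c).
Proof.
case: c => [|a c] //= hl.
rewrite rot1_cons nth_rcons; move: hl; rewrite ltnS leq_eqVlt => /orP[/eqP ->|hl].
  by rewrite ltnn eqxx modnn.
by rewrite hl modn_small ?ltnS.
Qed.

Lemma ring_edgeE (n : nat) (c : seq 'I_n) (j i x0 : 'I_n) :
  ring_edge c j i =
  has (fun l => (nth x0 c l == j) && (nth x0 (rot 1 c) l == i)) (iota 0 (size c)).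
Proof.
apply: eq_in_has => l; rewrite mem_iota add0n => /andP[_ hl].
rewrite nth_rot1 // (set_nth_default x0 j hl).
case: c hl => [|a c] //= hl.
by rewrite (set_nth_default x0 j) // ltn_mod.
Qed.

Lemma has_pair (T : eqType) (x0 : T) (s t : seq T) v y :
  uniq s -> size s = size t ->
  has (fun l => (nth x0 s l == v) && (nth x0 t l == y)) (iota 0 (size s)) =
  (v \in s) && (y == nth x0 t (index v s)).
Proof.
move=> us st; apply/hasP/andP.
- case=> l; rewrite mem_iota add0n => /andP[_ hl] /andP[/eqP hv /eqP hy].
  have vs : v \in s by rewrite -hv mem_nth.
  by split => //; rewrite -hv index_uniq // hy.
- case=> vs /eqP ->; exists (index v s).
    by rewrite mem_iota add0n index_mem vs.
  by rewrite nth_index // !eqxx.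
Qed.
Lemma ring_out (n : nat) (c : seq 'I_n) (v i x0 : 'I_n) : uniq c ->
  ring_edge c v i = (v \in c) && (i == nth x0 (rot 1 c) (index v c)).
Proof.
by move=> uc; rewrite (@ring_edgeE _ _ _ _ x0) has_pair // size_rot.
Qed.

Lemma ring_in (n : nat) (c : seq 'I_n) (j v x0 : 'I_n) : uniq c ->
  ring_edge c j v = (v \in c) && (j == nth x0 c (index v (rot 1 c))).
Proof.
move=> uc; rewrite (@ring_edgeE _ _ _ _ x0) -(size_rot 1) -(mem_rot 1) -(@has_pair _ x0) ?rot_uniq ?size_rot //.
by apply: eq_has => l /=; rewrite andbC.
Qed.

Lemma sum_via_rings (n : nat) (M : zmodType) (rings : seq (seq 'I_n))
  (P : pred 'I_n) (E : seq 'I_n -> pred 'I_n) (f : 'I_n -> M) :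
  (forall i, P i -> count (fun c => E c i) rings = 1%N) ->
  (forall c, c \in rings -> forall i, E c i -> P i) ->
  \sum_(i | P i) f i = \sum_(c <- rings) \sum_(i | E c i) f i.
Proof.
move=> hc hE.
transitivity (\sum_(i | P i) \sum_(c <- rings | E c i) f i).
  by apply: eq_bigr => i Pi; rewrite big_const_seq hc //= addr0.
rewrite (exchange_big_dep predT) //= big_seq [RHS]big_seq.
apply: eq_bigr => c cr; apply: eq_bigl => i.
by apply/andb_idl => /(hE c cr).
Qed.

Lemma balance (R : realType) (m n : nat) (N : 'I_n -> {set 'I_n})
  (K : 'I_n -> 'I_n -> 'M[R]_m) : links_ok N K ->
  forall v, \sum_(i | v \in N i) K v i = \sum_(j in N v) K j v.
Proof.
case=> bidir [rings [H1 H2 H3 H4]] v.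
rewrite (bigID (fun i => bidir v i)) [RHS](bigID (fun j => bidir j v)) /=.
congr (_ + _).
  transitivity (\sum_(i | bidir v i) K v i).
    by apply: eq_bigl => i /=; case: (boolP (bidir _ _)) => [/H1 [->]|]; rewrite ?andbF.
  transitivity (\sum_(j | bidir j v) K j v); last first.
    by apply: eq_bigl => i /=; case: (boolP (bidir _ _)) => [/H1 [->]|]; rewrite ?andbF.
  have bs i : bidir v i = bidir i v by apply/idP/idP => /H1 [_ []].
  rewrite (eq_bigl _ _ bs); apply: eq_bigr => i /H1 [_ [_ ->]] //.
rewrite (@sum_via_rings _ _ rings _ (fun c i => ring_edge c v i)); last first.
- by move=> c cr i /((H2 c cr).2 v i) [-> ->].
- by move=> i /andP[a b]; apply: H4.
rewrite [RHS](@sum_via_rings _ _ rings _ (fun c j => ring_edge c j v)); last first.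
- by move=> c cr j /((H2 c cr).2 j v) [-> ->].
- by move=> j /andP[a b]; apply: H4.
rewrite big_seq [RHS]big_seq; apply: eq_bigr => c cr.
have uc := (H2 c cr).1.
under eq_bigl do rewrite (@ring_out _ _ _ _ v) //.
under [RHS]eq_bigl do rewrite (@ring_in _ _ _ _ v) //.
case vc: (v \in c) => /=; last by rewrite !big_pred0.
rewrite !big_pred1_eq; apply: (H3 c cr).
  by rewrite (@ring_out _ _ _ _ v) // vc eqxx.
by rewrite (@ring_in _ _ _ _ v) // vc eqxx.
Qed.
Definition bf (R : realType) (m : nat) (K : 'M[R]_m) (u v : 'cV[R]_m) : R :=
  (u^T *m K *m v) ord0 ord0.

Lemma bfDr (R : realType) m (K : 'M[R]_m) u v w : bf K u (v + w) = bf K u v + bf K u w.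
Proof. by rewrite /bf mulmxDr mxE. Qed.
Lemma bfNr (R : realType) m (K : 'M[R]_m) u v : bf K u (- v) = - bf K u v.
Proof. by rewrite /bf mulmxN mxE. Qed.
Lemma bfBr (R : realType) m (K : 'M[R]_m) u v w : bf K u (v - w) = bf K u v - bf K u w.
Proof. by rewrite bfDr bfNr. Qed.
Lemma bfDl (R : realType) m (K : 'M[R]_m) u v w : bf K (v + w) u = bf K v u + bf K w u.
Proof. by rewrite /bf linearD /= !mulmxDl mxE. Qed.
Lemma bfNl (R : realType) m (K : 'M[R]_m) u v : bf K (- v) u = - bf K v u.
Proof. by rewrite /bf linearN /= !mulNmx mxE. Qed.
Lemma bfBl (R : realType) m (K : 'M[R]_m) u v w : bf K (v - w) u = bf K v u - bf K w u.
Proof. by rewrite bfDl bfNl. Qed.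
Lemma bfDK (R : realType) m (K L : 'M[R]_m) u v : bf (K + L) u v = bf K u v + bf L u v.
Proof. by rewrite /bf mulmxDr mulmxDl mxE. Qed.
Lemma bf0K (R : realType) m (u v : 'cV[R]_m) : bf 0 u v = 0.
Proof. by rewrite /bf mulmx0 mul0mx mxE. Qed.
Lemma bf_sumK (R : realType) m (I : finType) (P : pred I) (K : I -> 'M[R]_m) u v :
  bf (\sum_(i | P i) K i) u v = \sum_(i | P i) bf (K i) u v.
Proof.
apply: (big_ind2 (fun a b => bf a u v = b)) => //; first by rewrite bf0K.
by move=> ? ? ? ? <- <-; rewrite bfDK.
Qed.
Lemma bf0r (R : realType) m (K : 'M[R]_m) u : bf K u 0 = 0.
Proof. by rewrite /bf mulmx0 mxE. Qed.
Lemma bf_sumr (R : realType) m (I : finType) (P : pred I) (K : 'M[R]_m) u (v : I -> 'cV[R]_m) :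
  bf K u (\sum_(i | P i) v i) = \sum_(i | P i) bf K u (v i).
Proof.
apply: (big_ind2 (fun a b => bf K u a = b)) => //; first by rewrite bf0r.
by move=> ? ? ? ? <- <-; rewrite bfDr.
Qed.
Lemma bf1M (R : realType) m (K : 'M[R]_m) u v : bf 1%:M u (K *m v) = bf K u v.
Proof. by rewrite /bf mulmx1 mulmxA. Qed.
Lemma bfE (R : realType) m (K : 'M[R]_m) u v :
  bf K u v = \sum_b \sum_a u a ord0 * K a b * v b ord0.
Proof.
rewrite /bf mxE; apply: eq_bigr => b _; rewrite mxE big_distrl /=.
by apply: eq_bigr => a _; rewrite mxE.
Qed.
Lemma bf1E (R : realType) m (u v : 'cV[R]_m) :
  bf 1%:M u v = \sum_a u a ord0 * v a ord0.
Proof.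
by rewrite /bf mulmx1 mxE; apply: eq_bigr => a _; rewrite mxE.
Qed.
Lemma bfC (R : realType) m (K : 'M[R]_m) u v : K^T = K -> bf K u v = bf K v u.
Proof.
move=> hK; rewrite !bfE exchange_big; apply: eq_bigr => b _; apply: eq_bigr => a _.
by rewrite -[in RHS]hK mxE; ring.
Qed.
Lemma cont_sum (R : realType) (T : topologicalType) (I : Type) r (P : pred I)
  (f : I -> T -> R) : (forall i, continuous (f i)) ->
  continuous (fun s => \sum_(i <- r | P i) f i s).
Proof.
move=> h; rewrite -fct_sumE; apply: (big_ind (fun g => continuous g)).
- exact: cst_continuous.
- by move=> g1 g2 c1 c2 x; exact: (continuousD (c1 x) (c2 x)).
- by move=> i _; apply: h.
Qed.

Lemma der_sum (R : realType) (I : Type) r (P : pred I)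
  (f : I -> R -> R) (df : I -> R) (t : R) : (forall i, P i -> is_derive t (1:R) (f i) (df i)) ->
  is_derive t (1:R) (fun s => \sum_(i <- r | P i) f i s) (\sum_(i <- r | P i) df i).
Proof.
move=> h; rewrite -fct_sumE.
apply: (big_ind2 (fun g dg => is_derive t 1 g dg)).
- exact: is_derive_cst.
- by move=> g1 dg1 g2 dg2 d1 d2; apply: is_deriveD.
- exact: h.
Qed.

Lemma der_coord (R : realType) m (u : R -> 'cV[R]_m) (t : R) du a :
  is_derive t 1 u du -> is_derive t (1:R) (fun s => u s a ord0) (du a ord0).
Proof.
move=> hd.
have dv : derivable u t 1 by case: hd.
have := derive_mx dv; rewrite derive_val => ->; rewrite mxE.
apply: derivableP; exact: (proj1 (derivable_mxP u t 1) dv a ord0).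
Qed.

Lemma cont_coord (R : realType) m (u : R -> 'cV[R]_m) a :
  continuous u -> continuous (fun s => u s a ord0).
Proof.
move=> hu s.
exact: (continuous_comp (hu s) (@coord_continuous R _ _ a ord0 (u s))).
Qed.

Lemma cont_bf (R : realType) m (K : 'M[R]_m) (u v : R -> 'cV[R]_m) :
  continuous u -> continuous v -> continuous (fun s => bf K (u s) (v s)).
Proof.
move=> hu hv; under eq_fun do rewrite bfE.
apply: cont_sum => b; apply: cont_sum => a s.
have h1 : {for s, continuous ((fun s0 => u s0 a ord0 * K a b) \* (fun s0 => v s0 b ord0))}.
  apply: continuousM; last exact: (cont_coord (a:=b) hv).
  have h2 : {for s, continuous ((fun s0 => u s0 a ord0) \* (fun=> K a b))}.
    by apply: continuousM; [exact: (cont_coord (a:=a) hu)|exact: cst_continuous].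
  exact: h2.
exact: h1.
Qed.

Lemma der_mul (R : realType) (f g : R -> R) (t : R) df dg :
  is_derive t (1:R) f df -> is_derive t (1:R) g dg ->
  is_derive t (1:R) (fun s => f s * g s) (f t * dg + g t * df).
Proof. move=> hf hg; have h := is_deriveM hf hg; exact: h. Qed.

Lemma der_bf (R : realType) m (K : 'M[R]_m) (u v : R -> 'cV[R]_m) (t : R) du dv :
  is_derive t 1 u du -> is_derive t 1 v dv ->
  is_derive t (1:R) (fun s => bf K (u s) (v s)) (bf K du (v t) + bf K (u t) dv).
Proof.
move=> hu hv; under eq_fun do rewrite bfE.
have -> : bf K du (v t) + bf K (u t) dv =
  \sum_b \sum_a ((u t a ord0 * K a b) * dv b ord0 + v t b ord0 * (du a ord0 * K a b)).
  rewrite !bfE -big_split /=; apply: eq_bigr => b _; rewrite -big_split /=.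
  by apply: eq_bigr => a _; ring.
apply: der_sum => b _; apply: der_sum => a _.
apply: der_mul; last exact: der_coord.
have -> : du a ord0 * K a b = u t a ord0 * 0 + K a b * du a ord0.
  by rewrite mulr0 add0r mulrC.
apply: der_mul; last exact: der_coord.
Qed.
Lemma bfZl (R : realType) m (K : 'M[R]_m) (a : R) u v : bf K (a *: u) v = a * bf K u v.
Proof. by rewrite /bf linearZ /= -!scalemxAl mxE. Qed.
Lemma bfZr (R : realType) m (K : 'M[R]_m) (a : R) u v : bf K u (a *: v) = a * bf K u v.
Proof. by rewrite /bf -scalemxAr mxE. Qed.

Lemma norm_entry (R : realType) p q (M : 'M[R]_(p, q)) i j : `|M i j| <= `|M|.
Proof.
rewrite [leRHS]/Num.Def.normr /= mx_normrE.
by apply/bigmax_geP; right => /=; exists (i, j).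
Qed.

Lemma norm_entries (R : realType) p q (M : 'M[R]_(p, q)) c : 0 <= c ->
  (forall i j, `|M i j| <= c) -> `|M| <= c.
Proof.
move=> c0 h; rewrite [leLHS]/Num.Def.normr/= mx_normrE (bigmax_le _ c0)//=.
Qed.

Lemma norm_tr (R : realType) p q (M : 'M[R]_(p, q)) : `|M^T| = `|M|.
Proof.
apply/eqP; rewrite eq_le; apply/andP; split; apply: norm_entries => // i j.
  by rewrite mxE norm_entry.
by rewrite -[M]trmxK mxE trmxK norm_entry.
Qed.

Lemma spd_lb (R : realType) m (K : 'M[R]_m) : spd K ->
  exists2 c, 0 < c & forall v, c * `|v| ^+ 2 <= bf K v v.
Proof.
move=> [hKs hKp].
case: m K hKs hKp => [|m] K hKs hKp.
  exists 1 => // v; rewrite [v]flatmx0 normr0 expr0n /= mulr0.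
  by rewrite /bf mulmx0 mxE.
pose A := [set w : 'rV[R]_m.+1 | `|w| = 1].
pose f := fun w : 'rV[R]_m.+1 => bf K w^T w^T.
have An : A !=set0.
  exists (const_mx 1); rewrite /A /=; apply/eqP; rewrite eq_le; apply/andP; split.
    by apply: norm_entries => // i j; rewrite mxE normr1.
  by have := norm_entry (const_mx 1 : 'rV[R]_m.+1) ord0 ord0; rewrite mxE normr1.
have Ac : compact A.
  apply: bounded_closed_compact.
    exists 1; split => // M M1 w; rewrite /A /= => ->; exact: ltW.
  have -> : A = (@Num.norm _ 'rV[R]_m.+1) @^-1` [set x | x = 1] by [].
  apply: preimage_closed; last exact: closed_eq.
  by move=> w _; apply: norm_continuous.
have fc : {within A, continuous f}.
  apply: continuous_subspaceT => w.
  rewrite /f; under eq_fun do rewrite bfE.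
  apply: cont_sum => b; apply: cont_sum => a {}w.
  have h1 : {for w, continuous ((fun s0 : 'rV[R]_m.+1 => s0^T a ord0 * K a b) \* (fun s0 => s0^T b ord0))}.
    apply: continuousM.
      have h2 : {for w, continuous ((fun s0 : 'rV[R]_m.+1 => s0^T a ord0) \* (fun=> K a b))}.
        apply: continuousM; last exact: cst_continuous.
        have -> : (fun s0 : 'rV[R]_m.+1 => s0^T a ord0) = (fun s0 => s0 ord0 a).
          by apply/funext => s0; rewrite mxE.
        exact: coord_continuous.
      exact: h2.
    have -> : (fun s0 : 'rV[R]_m.+1 => s0^T b ord0) = (fun s0 => s0 ord0 b).
      by apply/funext => s0; rewrite mxE.
    exact: coord_continuous.
  exact: h1.
have [c cA cmin] := EVT_min_rV An Ac fc.
have c1 : `|c| = 1 by move: cA; rewrite inE.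
have fc0 : 0 < f c.
  rewrite /f /bf; apply: hKp.
  apply/eqP => /(congr1 (@trmx _ _ _)); rewrite trmxK trmx0 => c0.
  by move: c1; rewrite c0 normr0 => /eqP; rewrite eq_sym oner_eq0.
exists (f c) => // v.
have [->|v0] := eqVneq v 0.
  by rewrite normr0 expr0n /= mulr0 /bf mulmx0 mxE.
have nv : 0 < `|v| by rewrite normr_gt0.
have wA : ((`|v|^-1 *: v)^T) \in A.
  rewrite inE /A /= norm_tr normrZ ger0_norm ?invr_ge0 ?ltW //.
  by rewrite mulVf // gt_eqF.
have := cmin _ wA; rewrite /f trmxK bfZl bfZr => h.
have -> : bf K v v = `|v| ^+ 2 * (`|v|^-1 * (`|v|^-1 * bf K v v)).
  by field; rewrite gt_eqF.
by rewrite [X in _ <= X]mulrC ler_wpM2r // exprn_ge0 // ltW.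
Qed.
Definition prim (R : realType) (g : R -> R) (a x : R) : R :=
  (\int[@lebesgue_measure R]_(t in [set` `[a, x]]) (g t))%R.

Lemma prim_der (R : realType) (g : R -> R) (a s : R) : continuous g -> a < s ->
  is_derive s (1:R) (prim g a) (g s).
Proof.
move=> gc As; have s1 : s < s + 1 by rewrite ltrDl.
have ig : (@lebesgue_measure R).-integrable `[a, s + 1] (EFin \o g).
  apply: continuous_compact_integrable; first exact: segment_compact.
  exact: continuous_subspaceT.
have [d e] := continuous_FTC1_closed s1 ig As (gc s).
by apply: DeriveDef => //; rewrite -derive1E e.
Qed.
Lemma der_shiftT (R : realType) (V : normedModType R) (f : R -> V) (t T : R) df :
  is_derive (t - T) (1:R) f df -> is_derive t (1:R) (fun s => f (s - T)) df.
Proof.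
move=> [hd hv].
have eqq : (fun h : R => h^-1 *: (((fun s => f (s - T)) \o shift t) (h *: 1) - f (t - T))) =
  (fun h => h^-1 *: ((f \o shift (t - T)) (h *: 1) - f (t - T))).
  by apply/funext => h /=; rewrite addrA.
apply: DeriveDef.
  by rewrite /derivable eqq.
by rewrite /derive eqq.
Qed.

Lemma der_scale (R : realType) (f : R -> R) (t k df : R) :
  is_derive t (1:R) f df -> is_derive t (1:R) (fun s => k * f s) (k * df).
Proof. by move=> h; have h2 := is_deriveZ k h; exact: h2. Qed.
Lemma cont_within (R : realType) (f : R -> R) (a b : R) :
  (forall x, a <= x <= b -> derivable f x 1) -> {within `[a, b], continuous f}.
Proof.
move=> h; apply: continuous_in_subspaceT => x; rewrite inE /= in_itv /= => xab.
by apply: differentiable_continuous; apply/derivable1_diffP; apply: h.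
Qed.

Lemma mvt (R : realType) (f df : R -> R) (a b : R) : a <= b ->
  (forall x, a <= x <= b -> is_derive x (1:R) f (df x)) ->
  exists2 c, a <= c <= b & f b - f a = df c * (b - a).
Proof.
move=> ab h.
have [||c]:= @MVT_segment R f df a b ab.
- move=> x; rewrite in_itv /= => /andP[ax xb]; apply: h.
  by rewrite !ltW.
- by apply: cont_within => x /h [].
by rewrite in_itv /= => cab e; exists c.
Qed.

Lemma nonincr (R : realType) (V D : R -> R) (t0 : R) :
  (forall t, t0 < t -> is_derive t (1:R) V (- D t)) ->
  (forall t, t0 < t -> 0 <= D t) ->
  forall s t, t0 < s -> s <= t -> V t <= V s.
Proof.
move=> hV hD s t s0 st.
have [c /andP[sc ct] e] := mvt st (fun x hx => hV x (lt_le_trans s0 (proj1 (andP hx)))).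
rewrite -subr_le0 e mulNr oppr_le0 mulr_ge0 // ?subr_ge0 //.
by apply: hD; apply: lt_le_trans sc.
Qed.

Lemma drop (R : realType) (V D dD : R -> R) (t0 L eps : R) :
  (forall t, t0 < t -> is_derive t (1:R) V (- D t)) ->
  (forall t, t0 < t -> is_derive t (1:R) D (dD t)) ->
  (forall t, t0 < t -> `|dD t| <= L) -> 0 <= L -> 0 < eps ->
  forall t, t0 < t -> eps <= D t ->
  V (t + eps / (2 * (L + 1))) <= V t - eps / (2 * (L + 1)) * (eps / 2).
Proof.
move=> hV hD hdD L0 e0 t t0t et.
set d := eps / (2 * (L + 1)).
have d0 : 0 < d by rewrite divr_gt0 // mulr_gt0 // ltr_pwDr.
have Ld : L * d <= eps / 2.
  have L1 : L + 1 != 0 by rewrite gt_eqF // ltr_pwDr.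
  have -> : L * d = eps / 2 * (L / (L + 1)) by rewrite /d; field.
  apply: ler_piMr; first by rewrite divr_ge0 // ltW.
  by rewrite ler_pdivrMr ?ltr_pwDr // mul1r lerDl.
have td : t <= t + d by rewrite lerDl ltW.
have [c /andP[tc ctd] e] := mvt td (fun x hx => hV x (lt_le_trans t0t (proj1 (andP hx)))).
have Dc : eps / 2 <= D c.
  have [c' /andP[tc' c'c] e'] := mvt tc (fun x hx => hD x (lt_le_trans t0t (proj1 (andP hx)))).
  have h1 : - (L * d) <= dD c' * (c - t).
    have c't0 : t0 < c' by apply: lt_le_trans tc'.
    have ct0 : 0 <= c - t by rewrite subr_ge0.
    have ctd' : c - t <= d by rewrite lerBlDl.
    have : `|dD c' * (c - t)| <= L * d.
      rewrite normrM (ger0_norm ct0).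
      exact: ler_pM (normr_ge0 _) ct0 (hdD _ c't0) ctd'.
    by rewrite ler_norml => /andP[].
  have : D c = D t + dD c' * (c - t) by rewrite -e' addrC subrK.
  move=> ->.
  have : eps - eps / 2 <= D t - L * d by apply: lerB.
  rewrite {1}(splitr eps) addrK => h2.
  by apply: le_trans h2 _; rewrite lerD2l.
have : V (t + d) = V t - D c * d.
  have -> : V (t + d) = V t + (V (t + d) - V t) by rewrite addrCA subrr addr0.
  by rewrite e [t + d]addrC addrK mulNr.
move=> ->; rewrite lerD2l lerN2 mulrC.
by rewrite ler_pM2r.
Qed.
Lemma barbalat (R : realType) (V D dD : R -> R) (t0 L : R) :
  (forall t, t0 < t -> is_derive t (1:R) V (- D t)) ->
  (forall t, t0 < t -> 0 <= D t) ->
  (forall t, t0 < t -> 0 <= V t) ->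
  (forall t, t0 < t -> is_derive t (1:R) D (dD t)) ->
  (forall t, t0 < t -> `|dD t| <= L) -> 0 <= L ->
  forall eps, 0 < eps -> exists M, forall t, M < t -> D t < eps.
Proof.
move=> hV hD0 hV0 hD hdD L0 eps e0.
apply: contrapT => H.
have H' : forall M, exists t, M < t /\ eps <= D t.
  move=> M; apply: contrapT => H2; apply: H; exists M => t Mt.
  rewrite ltNge; apply/negP => Dt; by apply: H2; exists t.
set d := eps / (2 * (L + 1)).
have d0 : 0 < d by rewrite divr_gt0 // mulr_gt0 // ltr_pwDr.
set c := d * (eps / 2).
have c0 : 0 < c by rewrite mulr_gt0 // divr_gt0.
set s1 := t0 + 1.
have s10 : t0 < s1 by rewrite ltrDl.
have claim : forall k : nat, exists s, t0 < s /\ V s <= V s1 - k%:R * c.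
  elim=> [|k [s [s0 hs]]].
    by exists s1; split => //; rewrite mul0r subr0.
  have [t [st et]] := H' s.
  have t0t : t0 < t by apply: lt_trans st.
  exists (t + d); split; first by apply: lt_le_trans t0t _; rewrite lerDl ltW.
  apply: le_trans (drop hV hD hdD L0 e0 t0t et) _.
  rewrite -/d -/c (le_trans (lerB (nonincr hV hD0 s0 (ltW st)) (lexx c))) //.
  by rewrite -nat1r mulrDl mul1r opprD addrA [X in _ <= X]addrAC (lerB hs (lexx c)).
have [k hk] : exists k : nat, V s1 < k%:R * c.
  have Vs1 := hV0 _ s10.
  exists (Num.bound (V s1 / c)).
  by rewrite -ltr_pdivrMr // archi_boundP // divr_ge0 // ltW.
have [s [s0 hs]] := claim k.
have := hV0 _ s0.
by rewrite leNgt (le_lt_trans hs) // subr_lt0.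
Qed.
Lemma bf_spd_ge0 (R : realType) m (K : 'M[R]_m) v : spd K -> 0 <= bf K v v.
Proof.
move=> /spd_lb [c c0 h]; apply: le_trans (h v).
by rewrite mulr_ge0 // ?ltW // exprn_ge0.
Qed.

Lemma bf1_ge0 (R : realType) m (v : 'cV[R]_m) : 0 <= bf 1%:M v v.
Proof. by rewrite bf1E sumr_ge0 // => a _; rewrite -expr2 sqr_ge0. Qed.

Lemma norm_sq_le (R : realType) m (v : 'cV[R]_m) : `|v| ^+ 2 <= bf 1%:M v v.
Proof.
have s0 := bf1_ge0 v.
have : `|v| <= Num.sqrt (bf 1%:M v v).
  apply: norm_entries; first exact: sqrtr_ge0.
  move=> a j; rewrite (ord1 j) -sqrtr_sqr ler_sqrt // bf1E (bigD1 a) //= -expr2.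
  by rewrite lerDl sumr_ge0 // => b _; rewrite -expr2 sqr_ge0.
move=> h; rewrite -(sqr_sqrtr s0).
by rewrite ler_pXn2r // nnegrE ?normr_ge0 ?sqrtr_ge0.
Qed.

Lemma le_sum_one (R : realType) (I : finType) (P : pred I) (f : I -> R) i :
  P i -> (forall j, P j -> 0 <= f j) -> f i <= \sum_(j | P j) f j.
Proof.
move=> Pi h; rewrite (bigD1 i) //= lerDl sumr_ge0 // => j /andP[Pj _].
exact: h.
Qed.
Definition kn (R : realType) m (K : 'M[R]_m) : R := \sum_b \sum_a `|K a b|.

Lemma kn_ge0 (R : realType) m (K : 'M[R]_m) : 0 <= kn K.
Proof. by apply: sumr_ge0 => b _; apply: sumr_ge0. Qed.

Lemma norm_mx_le (R : realType) m (K : 'M[R]_m) (v : 'cV[R]_m) : `|K *m v| <= kn K * `|v|.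
Proof.
apply: norm_entries; first by rewrite mulr_ge0 // kn_ge0.
move=> a j; rewrite mxE (le_trans (ler_norm_sum _ _ _)) // /kn mulr_suml.
apply: ler_sum => b _; rewrite normrM ler_pM //.
  by apply: (@le_sum_one _ _ predT (fun a => `|K a b|)).
exact: norm_entry.
Qed.

Lemma bf_bound (R : realType) m (K : 'M[R]_m) (u v : 'cV[R]_m) :
  `|bf K u v| <= kn K * `|u| * `|v|.
Proof.
rewrite bfE (le_trans (ler_norm_sum _ _ _)) // /kn !mulr_suml.
apply: ler_sum => b _; rewrite (le_trans (ler_norm_sum _ _ _)) // !mulr_suml.
apply: ler_sum => a _; rewrite !normrM [`|u a _| * _]mulrC.
apply: ler_pM => //; last exact: norm_entry.
by rewrite ler_pM // norm_entry.
Qed.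

Definition bddR (R : realType) (a : R) (f : R -> R) :=
  exists M, forall t, a < t -> `|f t| <= M.
Definition bddV (R : realType) m (a : R) (f : R -> 'cV[R]_m) :=
  exists M, forall t, a < t -> `|f t| <= M.

Lemma bddR_add (R : realType) (a : R) f h : bddR a f -> bddR a h -> bddR a (fun t => f t + h t).
Proof.
move=> [M1 h1] [M2 h2]; exists (M1 + M2) => t at_.
by rewrite (le_trans (ler_normD _ _)) // lerD // ?h1 ?h2.
Qed.

Lemma bddR_sum (R : realType) (a : R) (I : Type) (r : seq I) (P : pred I) (f : I -> R -> R) :
  (forall i, P i -> bddR a (f i)) -> bddR a (fun t => \sum_(i <- r | P i) f i t).
Proof.
move=> h; elim: r => [|i r ih].
  by exists 0 => t _; rewrite big_nil normr0.
case Pi: (P i).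
  have := bddR_add (h i Pi) ih; apply: (fun H => _) => -[M hM].
  by exists M => t at_; rewrite big_cons Pi; apply: hM.
case: ih => M hM; exists M => t at_; rewrite big_cons Pi; exact: hM.
Qed.

Lemma bddR_mulc (R : realType) (a k : R) f : bddR a f -> bddR a (fun t => k * f t).
Proof.
move=> [M hM]; exists (`|k| * M) => t at_.
by rewrite normrM ler_pM // hM.
Qed.

Lemma bddR_bf (R : realType) m (a : R) (K : 'M[R]_m) u v :
  bddV a u -> bddV a v -> bddR a (fun t => bf K (u t) (v t)).
Proof.
move=> [M1 h1] [M2 h2]; exists (kn K * M1 * M2) => t at_.
apply: (le_trans (bf_bound _ _ _)).
rewrite ler_pM // ?mulr_ge0 // ?kn_ge0 //; last exact: h2.
by rewrite ler_pM // ?kn_ge0 // h1.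
Qed.

Lemma bddV_add (R : realType) m (a : R) (f h : R -> 'cV[R]_m) :
  bddV a f -> bddV a h -> bddV a (fun t => f t + h t).
Proof.
move=> [M1 h1] [M2 h2]; exists (M1 + M2) => t at_.
by rewrite (le_trans (ler_normD _ _)) // lerD // ?h1 ?h2.
Qed.

Lemma bddV_opp (R : realType) m (a : R) (f : R -> 'cV[R]_m) :
  bddV a f -> bddV a (fun t => - f t).
Proof. by move=> [M h]; exists M => t at_; rewrite normrN h. Qed.

Lemma bddV_sub (R : realType) m (a : R) (f h : R -> 'cV[R]_m) :
  bddV a f -> bddV a h -> bddV a (fun t => f t - h t).
Proof. by move=> hf hh; apply: bddV_add => //; apply: bddV_opp. Qed.

Lemma bddV_sum (R : realType) m (a : R) (I : Type) (r : seq I) (P : pred I)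
  (f : I -> R -> 'cV[R]_m) :
  (forall i, P i -> bddV a (f i)) -> bddV a (fun t => \sum_(i <- r | P i) f i t).
Proof.
move=> h; elim: r => [|i r ih].
  by exists 0 => t _; rewrite big_nil normr0.
case Pi: (P i).
  have [M hM] := bddV_add (h i Pi) ih.
  by exists M => t at_; rewrite big_cons Pi; apply: hM.
case: ih => M hM; exists M => t at_; rewrite big_cons Pi; exact: hM.
Qed.

Lemma bddV_mx (R : realType) m (a : R) (K : 'M[R]_m) (f : R -> 'cV[R]_m) :
  bddV a f -> bddV a (fun t => K *m f t).
Proof.
move=> [M h]; exists (kn K * M) => t at_.
by rewrite (le_trans (norm_mx_le _ _)) // ler_pM // ?kn_ge0 // h.
Qed.

Lemma bddV_0 (R : realType) m (a : R) : bddV a (fun _ => 0 : 'cV[R]_m).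
Proof. by exists 0 => t _; rewrite normr0. Qed.

Lemma bddR_0 (R : realType) (a : R) : bddR a (fun _ => 0).
Proof. by exists 0 => t _; rewrite normr0. Qed.

Lemma bddV_ext (R : realType) m (a : R) (f h : R -> 'cV[R]_m) :
  (forall t, f t = h t) -> bddV a f -> bddV a h.
Proof. by move=> e [M hM]; exists M => t at_; rewrite -e hM. Qed.

Lemma bddR_ext (R : realType) (a : R) (f h : R -> R) :
  (forall t, f t = h t) -> bddR a f -> bddR a h.
Proof. by move=> e [M hM]; exists M => t at_; rewrite -e hM. Qed.

Lemma der_subv (R : realType) m (f h : R -> 'cV[R]_m) (t : R) df dh :
  is_derive t (1:R) f df -> is_derive t (1:R) h dh ->
  is_derive t (1:R) (fun s => f s - h s) (df - dh).
Proof. by move=> a b; have c := is_deriveB a b; exact: c. Qed.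

Definition conv0 (R : realType) m (f : R -> 'cV[R]_m) :=
  forall eps, 0 < eps -> exists M, forall t, M < t -> `|f t| < eps.

Lemma conv0_ext (R : realType) m (f h : R -> 'cV[R]_m) :
  (forall t, f t = h t) -> conv0 f -> conv0 h.
Proof.
move=> E hf eps e0; have [M hM] := hf eps e0.
by exists M => t Mt; rewrite -E hM.
Qed.

Lemma conv0_add (R : realType) m (f h : R -> 'cV[R]_m) :
  conv0 f -> conv0 h -> conv0 (fun t => f t + h t).
Proof.
move=> hf hh eps e0.
have e2 : 0 < eps / 2 by rewrite divr_gt0.
have [M1 h1] := hf _ e2; have [M2 h2] := hh _ e2.
exists (Num.max M1 M2) => t; rewrite gt_max => /andP[t1 t2].
rewrite (le_lt_trans (ler_normD _ _)) // (splitr eps) ltrD //.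
  exact: h1.
exact: h2.
Qed.

Lemma conv0_opp (R : realType) m (f : R -> 'cV[R]_m) :
  conv0 f -> conv0 (fun t => - f t).
Proof.
move=> hf eps e0; have [M hM] := hf eps e0.
by exists M => t Mt; rewrite normrN hM.
Qed.

Lemma conv0_shift (R : realType) m (f : R -> 'cV[R]_m) (c : R) :
  conv0 f -> conv0 (fun t => f (t - c)).
Proof.
move=> hf eps e0; have [M hM] := hf eps e0.
exists (M + c) => t Mt; apply: hM; by rewrite ltrBrDr.
Qed.

Lemma conv0_unshift (R : realType) m (f : R -> 'cV[R]_m) (c : R) :
  conv0 (fun t => f (t - c)) -> conv0 f.
Proof.
move=> hf eps e0; have [M hM] := hf eps e0.
exists (M - c) => t Mt; have := hM (t + c).
by rewrite addrK; apply; rewrite -ltrBlDr.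
Qed.

Lemma conv0_quad (R : realType) m (Kq : 'M[R]_m) (f : R -> 'cV[R]_m) : spd Kq ->
  (forall eta, 0 < eta -> exists M, forall t, M < t -> bf Kq (f t) (f t) < eta) ->
  conv0 f.
Proof.
move=> /spd_lb [c c0 hc] hq eps e0.
have [M hM] := hq (c * eps ^+ 2) (mulr_gt0 c0 (exprn_gt0 2 e0)).
exists M => t Mt.
have h : c * `|f t| ^+ 2 < c * eps ^+ 2 := le_lt_trans (hc (f t)) (hM t Mt).
rewrite ltr_pM2l // in h.
by rewrite -(ltr_pXn2r (_ : (0 < 2)%N)) // nnegrE ?normr_ge0 ?ltW.
Qed.
Lemma der_subc (R : realType) (V : normedModType R) (f : R -> V) (t : R) df c :
  is_derive t (1:R) f df -> is_derive t (1:R) (fun s => f s - c) df.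
Proof.
move=> h; have h2 := is_deriveB h (is_derive_cst c t 1).
rewrite subr0 in h2; exact: h2.
Qed.

Lemma der_addf (R : realType) (f h : R -> R) (t : R) df dh :
  is_derive t (1:R) f df -> is_derive t (1:R) h dh ->
  is_derive t (1:R) (fun s => f s + h s) (df + dh).
Proof. by move=> a b; have c := is_deriveD a b; exact: c. Qed.

Lemma der_subf (R : realType) (f h : R -> R) (t : R) df dh :
  is_derive t (1:R) f df -> is_derive t (1:R) h dh ->
  is_derive t (1:R) (fun s => f s - h s) (df - dh).
Proof. by move=> a b; have c := is_deriveB a b; exact: c. Qed.

Section Main.
Variables (R : realType) (m n : nat) (N : 'I_n -> {set 'I_n})
  (K : 'I_n -> 'I_n -> 'M[R]_m) (T : 'I_n -> 'I_n -> R)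
  (gamma : 'I_n -> bool) (K0 : 'I_n -> 'M[R]_m)
  (x0 : 'cV[R]_m) (x : 'I_n -> R -> 'cV[R]_m).
Hypotheses (hK : forall i j, j \in N i -> spd (K j i))
  (hT : forall i j, j \in N i -> 0 <= T j i)
  (hK0 : forall i, gamma i -> spd (K0 i))
  (hlinks : links_ok N K)
  (hcont : forall i, continuous (x i))
  (hdyn : forall i (t : R), 0 < t ->
     is_derive t 1 (x i)
       (\sum_(j in N i) K j i *m (x j (t - T j i) - x i t)
        + (if gamma i then K0 i *m (x0 - x i t) else 0))).

Definition e (i : 'I_n) (t : R) : 'cV[R]_m := x i t - x0.
Definition F (i : 'I_n) (t : R) : 'cV[R]_m := \sum_(j in N i) K j i *m (e j (t - T j i) - e i t)
  - (if gamma i then K0 i *m e i t else 0).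

Lemma e_der (i : 'I_n) (t : R) : 0 < t -> is_derive t (1:R) (e i) (F i t).
Proof.
move=> t0; apply: is_derive_eq; first exact: der_subc (hdyn i t0).
rewrite /F; congr (_ + _).
  by apply: eq_bigr => j _; rewrite /e opprB addrA subrK.
by case: (gamma i); rewrite ?oppr0 // /e -mulmxN opprB.
Qed.

Lemma e_cont (i : 'I_n) : continuous (e i).
Proof.
move=> t; apply: continuousB; first exact: hcont.
exact: cst_continuous.
Qed.

Definition d (j i : 'I_n) (t : R) : 'cV[R]_m := e i t - e j (t - T j i).
Definition g (j i : 'I_n) (s : R) : R := bf (K j i) (e j s) (e j s).
Definition G (j i : 'I_n) : R -> R := prim (g j i) (- T j i - 1).
Definition V (t : R) : R :=
  \sum_i 2^-1 * bf 1%:M (e i t) (e i t) +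
  \sum_i \sum_(j in N i) 2^-1 * (G j i t - G j i (t - T j i)).
Definition D (t : R) : R :=
  \sum_i \sum_(j in N i) 2^-1 * bf (K j i) (d j i t) (d j i t) +
  \sum_i (if gamma i then bf (K0 i) (e i t) (e i t) else 0).

Lemma Ksym i j : j \in N i -> (K j i)^T = K j i.
Proof. by move/hK => []. Qed.

Lemma per_term (Kj : 'M[R]_m) (u w z : 'cV[R]_m) : Kj^T = Kj ->
  bf Kj u (w - u) + 2^-1 * (bf Kj z z - bf Kj w w) =
  2^-1 * (bf Kj z z - bf Kj u u) - 2^-1 * bf Kj (u - w) (u - w).
Proof.
move=> hs; rewrite !bfBr !bfBl (bfC u w hs).
lra.
Qed.

Lemma per_i (i : 'I_n) (t : R) :
  2^-1 * (bf 1%:M (F i t) (e i t) + bf 1%:M (e i t) (F i t)) +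
  \sum_(j in N i) 2^-1 * (g j i t - g j i (t - T j i)) =
  \sum_(j in N i) 2^-1 * (bf (K j i) (e j t) (e j t) - bf (K j i) (e i t) (e i t)) -
  (\sum_(j in N i) 2^-1 * bf (K j i) (d j i t) (d j i t) +
   (if gamma i then bf (K0 i) (e i t) (e i t) else 0)).
Proof.
rewrite [bf 1%:M (F i t) _]bfC ?trmx1 //.
have -> : forall y : R, 2^-1 * (y + y) = y by move=> y; field.
rewrite /F bfBr bf_sumr.
have -> : bf 1%:M (e i t) (if gamma i then K0 i *m e i t else 0) =
    (if gamma i then bf (K0 i) (e i t) (e i t) else 0).
  by case: (gamma i); rewrite ?bf1M ?bf0r.
set gm := (if gamma i then _ else _).
suff : \sum_(j in N i) bf 1%:M (e i t) (K j i *m (e j (t - T j i) - e i t)) +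
  \sum_(j in N i) 2^-1 * (g j i t - g j i (t - T j i)) =
  \sum_(j in N i) 2^-1 * (bf (K j i) (e j t) (e j t) - bf (K j i) (e i t) (e i t)) -
  \sum_(j in N i) 2^-1 * bf (K j i) (d j i t) (d j i t).
  by move=> h; lra.
rewrite -big_split -sumrB /=; apply: eq_bigr => j jN.
by rewrite bf1M /g /d per_term // Ksym.
Qed.

Lemma bal_sum (t : R) : \sum_i \sum_(j in N i)
  2^-1 * (bf (K j i) (e j t) (e j t) - bf (K j i) (e i t) (e i t)) = 0.
Proof.
transitivity (2^-1 * (\sum_i \sum_(j in N i) bf (K j i) (e j t) (e j t) -
   \sum_i \sum_(j in N i) bf (K j i) (e i t) (e i t))).
  rewrite -sumrB mulr_sumr; apply: eq_bigr => i _; rewrite -sumrB mulr_sumr //.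
suff -> : \sum_i \sum_(j in N i) bf (K j i) (e j t) (e j t) =
  \sum_i \sum_(j in N i) bf (K j i) (e i t) (e i t) by rewrite subrr mulr0.
rewrite (exchange_big_dep predT) //=; apply: eq_bigr => j _.
by rewrite -!bf_sumK (balance hlinks j).
Qed.

Lemma g_cont j i : continuous (g j i).
Proof. exact: (cont_bf (K:=K j i) (e_cont (i:=j)) (e_cont (i:=j))). Qed.

Lemma V_der (t : R) : 0 < t -> is_derive t (1:R) V (- D t).
Proof.
move=> t0.
have hA : is_derive t (1:R) (fun s => \sum_i 2^-1 * bf 1%:M (e i s) (e i s))
   (\sum_i 2^-1 * (bf 1%:M (F i t) (e i t) + bf 1%:M (e i t) (F i t))).
  apply: der_sum => i _; apply: der_scale; apply: der_bf; exact: e_der.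
have hB : is_derive t (1:R)
   (fun s => \sum_i \sum_(j in N i) 2^-1 * (G j i s - G j i (s - T j i)))
   (\sum_i \sum_(j in N i) 2^-1 * (g j i t - g j i (t - T j i))).
  apply: der_sum => i _; apply: der_sum => j jN; apply: der_scale.
  have Tji := hT jN.
  apply: der_subf.
    by apply: prim_der; [exact: g_cont | lra].
  by apply: der_shiftT; apply: prim_der; [exact: g_cont | lra].
have h := der_addf hA hB.
apply: (is_derive_eq h).
rewrite -big_split /=; under eq_bigr do rewrite per_i.
by rewrite sumrB big_split /= bal_sum /D add0r.
Qed.


Lemma Gdiff_ge0 i j (t : R) : j \in N i -> 0 < t -> 0 <= G j i t - G j i (t - T j i).
Proof.
move=> jN t0; have Tji := hT jN.
have ab : t - T j i <= t by rewrite lerBlDr lerDl.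
have hd : forall s, t - T j i <= s <= t -> is_derive s (1:R) (G j i) (g j i s).
  move=> s /andP[s1 s2]; apply: prim_der; first exact: g_cont.
  lra.
have [c /andP[c1 c2] ->] := mvt ab hd.
rewrite mulr_ge0 //; first exact: bf_spd_ge0 (hK jN).
by rewrite subr_ge0.
Qed.

Lemma V_ge0 (t : R) : 0 < t -> 0 <= V t.
Proof.
move=> t0; rewrite /V addr_ge0 //.
  by apply: sumr_ge0 => i _; rewrite mulr_ge0 // bf1_ge0.
apply: sumr_ge0 => i _; apply: sumr_ge0 => j jN.
by rewrite mulr_ge0 // Gdiff_ge0.
Qed.

Lemma D_ge0 (t : R) : 0 <= D t.
Proof.
rewrite /D addr_ge0 //.
  apply: sumr_ge0 => i _; apply: sumr_ge0 => j jN.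
  by rewrite mulr_ge0 // bf_spd_ge0 //; apply: hK.
apply: sumr_ge0 => i _; case E: (gamma i) => //.
exact: bf_spd_ge0 (hK0 E).
Qed.

Lemma e_le_V i (t : R) : 0 < t -> `|e i t| ^+ 2 <= 2 * V t.
Proof.
move=> t0; apply: (le_trans (norm_sq_le (e i t))).
have h1 : 2^-1 * bf 1%:M (e i t) (e i t) <= \sum_k 2^-1 * bf 1%:M (e k t) (e k t).
  apply: (@le_sum_one _ _ predT (fun k => 2^-1 * bf 1%:M (e k t) (e k t))) => // k _.
  by rewrite mulr_ge0 // bf1_ge0.
have h2 : 0 <= \sum_k \sum_(j in N k) 2^-1 * (G j k t - G j k (t - T j k)).
  apply: sumr_ge0 => k _; apply: sumr_ge0 => j jN.
  by rewrite mulr_ge0 // Gdiff_ge0.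
rewrite /V; lra.
Qed.

Lemma e_bound : exists B, forall i (s : R), 1 <= s -> `|e i s| <= B.
Proof.
exists (1 + 2 * V 1) => i s s1.
have V1 : 0 <= V 1 by apply: V_ge0.
have h : `|e i s| ^+ 2 <= 2 * V 1.
  apply: (le_trans (e_le_V i (lt_le_trans ltr01 s1))).
  rewrite ler_pM2l //.
  exact: (nonincr V_der (fun t _ => D_ge0 t) ltr01 s1).
have [le1|gt1] := lerP `|e i s| 1.
  by apply: (le_trans le1); rewrite lerDl mulr_ge0.
apply: (le_trans _ (ler_wpDl ler01 h)).
by rewrite expr2 ler_peMr // ltW.
Qed.

Definition Tm : R := \sum_i \sum_(j in N i) T j i.
Definition t0 : R := 1 + 2 * Tm.

Lemma T_le_Tm i j : j \in N i -> T j i <= Tm.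
Proof.
move=> jN; apply: (le_trans _ (@le_sum_one _ _ predT (fun i => \sum_(j in N i) T j i) i _ _)) => //.
- by apply: (@le_sum_one _ _ (fun j => j \in N i) (fun j => T j i)) => // k; apply: hT.
- by move=> k _; apply: sumr_ge0 => l; apply: hT.
Qed.

Lemma Tm_ge0 : 0 <= Tm.
Proof. by apply: sumr_ge0 => i _; apply: sumr_ge0 => j; apply: hT. Qed.

Lemma bdd_e_shift i (c : R) : 0 <= c <= 2 * Tm -> bddV t0 (fun t => e i (t - c)).
Proof.
move=> /andP[c0 c1]; have [B hB] := e_bound.
exists B => t tt; apply: hB; rewrite /t0 in tt; lra.
Qed.

Lemma bdd_F_shift i (c : R) : 0 <= c <= Tm -> bddV t0 (fun t => F i (t - c)).
Proof.
move=> /andP[c0 c1]; have Tm0 := Tm_ge0.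
rewrite /F; apply: bddV_sub.
  apply: bddV_sum => j jN; apply: bddV_mx; apply: bddV_sub.
    apply: (@bddV_ext _ _ _ (fun t => e j (t - (c + T j i)))).
      by move=> t; rewrite opprD addrA.
    have := T_le_Tm jN; have := hT jN => h1 h2.
    by apply: bdd_e_shift; apply/andP; split; lra.
  by apply: bdd_e_shift; apply/andP; split; lra.
case: (gamma i); last exact: bddV_0.
by apply: bddV_mx; apply: bdd_e_shift; apply/andP; split; lra.
Qed.

Lemma bdd_e i : bddV t0 (e i).
Proof.
have Tm0 := Tm_ge0.
apply: (@bddV_ext _ _ _ (fun t => e i (t - 0))); first by move=> t; rewrite subr0.
by apply: bdd_e_shift; apply/andP; split; lra.
Qed.

Lemma bdd_F i : bddV t0 (F i).
Proof.
have Tm0 := Tm_ge0.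
apply: (@bddV_ext _ _ _ (fun t => F i (t - 0))); first by move=> t; rewrite subr0.
by apply: bdd_F_shift; apply/andP; split; lra.
Qed.

Definition dd (j i : 'I_n) (t : R) : 'cV[R]_m := F i t - F j (t - T j i).
Definition dD (t : R) : R :=
  \sum_i \sum_(j in N i) 2^-1 * (bf (K j i) (dd j i t) (d j i t) + bf (K j i) (d j i t) (dd j i t)) +
  \sum_i (if gamma i then bf (K0 i) (F i t) (e i t) + bf (K0 i) (e i t) (F i t) else 0).

Lemma d_der j i (t : R) : j \in N i -> t0 < t -> is_derive t (1:R) (d j i) (dd j i t).
Proof.
move=> jN tt; have := T_le_Tm jN; have := hT jN; have Tm0 := Tm_ge0 => h1 h2.
rewrite /t0 in tt.
apply: der_subv; first by apply: e_der; lra.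
by apply: der_shiftT; apply: e_der; lra.
Qed.

Lemma D_der (t : R) : t0 < t -> is_derive t (1:R) D (dD t).
Proof.
move=> tt; have Tm0 := Tm_ge0; have tp : 0 < t by rewrite /t0 in tt; lra.
apply: der_addf.
  apply: der_sum => i _; apply: der_sum => j jN; apply: der_scale.
  by apply: der_bf; apply: d_der.
apply: der_sum => i _; case: (gamma i).
  by apply: der_bf; apply: e_der.
exact: is_derive_cst.
Qed.

Lemma dD_bdd : bddR t0 dD.
Proof.
have Tm0 := Tm_ge0.
have bd j i : j \in N i -> bddV t0 (d j i).
  move=> jN; apply: bddV_sub; first exact: bdd_e.
  apply: bdd_e_shift; have := T_le_Tm jN; have := hT jN => h1 h2.
  apply/andP; split; lra.
have bdd j i : j \in N i -> bddV t0 (dd j i).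
  move=> jN; apply: bddV_sub; first exact: bdd_F.
  apply: bdd_F_shift; have := T_le_Tm jN; have := hT jN => h1 h2.
  apply/andP; split; lra.
apply: bddR_add.
  apply: bddR_sum => i _; apply: bddR_sum => j jN; apply: bddR_mulc.
  by apply: bddR_add; apply: bddR_bf; auto.
apply: bddR_sum => i _; case: (gamma i); last exact: bddR_0.
by apply: bddR_add; apply: bddR_bf; auto using bdd_e, bdd_F.
Qed.

Lemma D_small eps : 0 < eps -> exists M, forall t, M < t -> D t < eps.
Proof.
move=> e0; have [L hL] := dD_bdd; have Tm0 := Tm_ge0.
apply: (@barbalat _ V D dD t0 `|L|) => //.
- by move=> t tt; apply: V_der; rewrite /t0 in tt; lra.
- by move=> t _; apply: D_ge0.
- by move=> t tt; apply: V_ge0; rewrite /t0 in tt; lra.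
- exact: D_der.
- by move=> t tt; apply: (le_trans (hL t tt)); apply: ler_norm.
Qed.

Lemma d_conv j i : j \in N i -> conv0 (d j i).
Proof.
move=> jN; apply: (conv0_quad (hK jN)) => eta eta0.
have e2 : 0 < eta / 2 by rewrite divr_gt0.
have [M hM] := D_small e2.
exists M => t Mt; have := hM t Mt.
have : 2^-1 * bf (K j i) (d j i t) (d j i t) <= D t.
  rewrite /D; apply: le_trans (_ : _ <= \sum_i \sum_(j in N i) 2^-1 * bf (K j i) (d j i t) (d j i t)) _.
    apply: le_trans (_ : _ <= \sum_(k in N i) 2^-1 * bf (K k i) (d k i t) (d k i t)) _.
      apply: (@le_sum_one _ _ (fun k => k \in N i) (fun k => 2^-1 * bf (K k i) (d k i t) (d k i t))) => // k kN.
      by rewrite mulr_ge0 // bf_spd_ge0 //; apply: hK.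
    apply: (@le_sum_one _ _ predT (fun i => \sum_(k in N i) 2^-1 * bf (K k i) (d k i t) (d k i t))) => // l _.
    by apply: sumr_ge0 => k kN; rewrite mulr_ge0 // bf_spd_ge0 //; apply: hK.
  rewrite lerDl; apply: sumr_ge0 => l _; case E: (gamma l) => //.
  exact: bf_spd_ge0 (hK0 E).
lra.
Qed.

Lemma gam_conv i : gamma i -> conv0 (e i).
Proof.
move=> gi; apply: (conv0_quad (hK0 gi)) => eta eta0.
have [M hM] := D_small eta0.
exists M => t Mt; apply: le_lt_trans (hM t Mt).
rewrite /D; apply: le_trans (_ : _ <= \sum_i (if gamma i then bf (K0 i) (e i t) (e i t) else 0)) _.
  have := @le_sum_one _ _ predT (fun i => if gamma i then bf (K0 i) (e i t) (e i t) else 0) i isT.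
  rewrite gi; apply => k _; case E: (gamma k) => //.
  exact: bf_spd_ge0 (hK0 E).
rewrite lerDr; apply: sumr_ge0 => l _; apply: sumr_ge0 => k kN.
by rewrite mulr_ge0 // bf_spd_ge0 //; apply: hK.
Qed.

Definition Pc (u : option 'I_n) : Prop :=
  if u is Some i then conv0 (e i) else True.

Lemma adj_step u v : Pc u -> net_adj N gamma u v -> Pc v.
Proof.
case: u => [a|]; case: v => [b|] //=; last by move=> _; apply: gam_conv.
move=> ha /orP[abN|baN].
-
  have h1 := d_conv abN.
  have h2 := conv0_shift (T a b) ha.
  apply: (conv0_ext _ (conv0_add h1 h2)) => t.
  by rewrite /d subrK.
- have h1 := d_conv baN.
  apply: (conv0_unshift (c := T b a)).
  apply: (conv0_ext _ (conv0_add ha (conv0_opp h1))) => t.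
  by rewrite /d opprB addrC subrK.
Qed.

Hypothesis hconn : net_connected N gamma.

Lemma path_P (p : seq (option 'I_n)) u :
  Pc u -> path (net_adj N gamma) u p -> Pc (last u p).
Proof.
elim: p u => [|v p ih] u Pu //= /andP[a pt].
exact: ih (adj_step Pu a) pt.
Qed.

Lemma all_conv i : conv0 (e i).
Proof.
have := hconn None (Some i); case/connectP => p pt lst.
have := path_P (I : Pc None) pt; rewrite -lst; exact.
Qed.

Lemma conv_final i : x i t @[t --> +oo] --> x0.
Proof.
apply/cvgrPdist_lt => eps e0; have [M hM] := (all_conv i) eps e0.
exists M; split; first exact: num_real.
by move=> t Mt; rewrite -normrN opprB; apply: hM.
Qed.
End Main.

Unset Implicit Arguments.

Theorem theorem4 (R : realType) (m n : nat)
  (N : 'I_n -> {set 'I_n})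
  (K : 'I_n -> 'I_n -> 'M[R]_m) (T : 'I_n -> 'I_n -> R)
  (gamma : 'I_n -> bool) (K0 : 'I_n -> 'M[R]_m)
  (x0 : 'cV[R]_m) (x : 'I_n -> R -> 'cV[R]_m)
  (hN : forall i, i \notin N i)
  (hK : forall i j, j \in N i -> spd (K j i))
  (hT : forall i j, j \in N i -> 0 <= T j i)
  (hK0 : forall i, gamma i -> spd (K0 i))
  (hgam : exists i, gamma i)
  (hconn : net_connected N gamma)
  (hlinks : links_ok N K)
  (hcont : forall i, continuous (x i))
  (hdyn : forall i (t : R), 0 < t ->
     is_derive t 1 (x i)
       (\sum_(j in N i) K j i *m (x j (t - T j i) - x i t)
        + (if gamma i then K0 i *m (x0 - x i t) else 0))) :
  forall i, x i t @[t --> +oo] --> x0.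
Proof.
move=> i; exact: (conv_final hK hT hK0 hlinks hcont hdyn hconn).
Qed.
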